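(* Let $(\mathfrak{h},[\cdot,\cdot])$ be a finite-dimensional real left Leibniz algebra and let $x\stackrel{c}{\rhd}y=\exp(\mathrm{ad}_x)(y)$ be its canonical linear Lie rack operation. Then \[x\stackrel{c}{\rhd}y=\sum_{n=0}^\infty A^0_{n,1}(x,\ldots,x,y),\] where $A^0_{0,1}(x,y)=y$ and, for $n\ge1$, \[A^0_{n,1}(x_1,\ldots,x_n,y)=\frac{1}{(n!)^2}\sum_{\sigma\in S_n}\mathrm{ad}_{x_{\sigma(1)}}\circ\cdots\circ\mathrm{ad}_{x_{\sigma(n)}}(y),\] $S_n$ being the symmetric group on $\{1,\ldots,n\}$. Furthermore, writing $A^0_{n,1}(x,y)=A^0_{n,1}(x,\ldots,x,y)$, for all integers $p,q\ge1$ and all $x,y,z\in\mathfrak{h}$, \[A^0_{p,1}(x,A^0_{q,1}(y,z))=\sum_{s_1+\cdots+s_q+k=p}A^0_{q,1}\big(A^0_{s_1,1}(x,y),\ldots,A^0_{s_q,1}(x,y),A^0_{k,1}(x,z)\big),\] the sum over all tuples of nonnegative integers $(s_1,\ldots,s_q,k)$ summing to $p$.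
   Context: A left Leibniz algebra is a vector space with bilinear bracket satisfying $[u,[v,w]]=[[u,v],w]+[v,[u,w]]$; $\mathrm{ad}_x(y)=[x,y]$. *)

(* Defs.v *)
From HB Require Import structures.
From mathcomp Require Import all_boot all_order all_algebra all_fingroup.
From mathcomp Require Import all_classical all_reals all_analysis.
Set Implicit Arguments. Unset Strict Implicit. Unset Printing Implicit Defensive.
Import Order.TTheory GRing.Theory Num.Theory.
Import numFieldNormedType.Exports.
Local Open Scope classical_set_scope.
Local Open Scope ring_scope.

(* The finite-dimensional real vector space h is modelled as 'rV[R]_d,
   with R : realType and an arbitrary bracket br. *)
Section Defs.
Variables (R : realType) (d : nat).
Notation V := 'rV[R]_d.
Variable br : V -> V -> V.

Definition bilinear_bracket : Prop :=
  (forall (a : R) (u v w : V), br (a *: u + v) w = a *: br u w + br v w) /\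
  (forall (a : R) (u v w : V), br w (a *: u + v) = a *: br w u + br w v).

Definition left_leibniz : Prop :=
  forall u v w : V, br u (br v w) = br (br u v) w + br v (br u w).

Definition ad (x : V) : V -> V := br x.

Definition ad_comp (l : seq V) (y : V) : V := foldr (fun x acc => ad x acc) y l.

Definition expad (x y : V) : V :=
  lim (series (fun k : nat => (k`!%:R)^-1 *: iter k (ad x) y) @ \oo).

Definition A0 (n : nat) (xs : 'I_n -> V) (y : V) : V :=
  if n is 0 then y else
  ((n`!%:R ^+ 2)^-1 : R) *:
    \sum_(s : 'S_n) ad_comp [seq xs (s i) | i <- enum 'I_n] y.

Definition A0d (n : nat) (x y : V) : V := A0 (fun _ : 'I_n => x) y.

End Defs.

(* Main.v *)
Require Import Defs.
From HB Require Import structures.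
From mathcomp Require Import all_boot all_order all_algebra all_fingroup.
From mathcomp Require Import all_classical all_reals all_analysis.
From mathcomp Require Import zify.
Import Order.TTheory GRing.Theory Num.Theory.
Import numFieldNormedType.Exports.
Local Open Scope ring_scope.

HB.instance Definition _ (R : realType) d := Complete.on 'M[R]_(1,d).

Section Alg.
Variables (R : realType) (d : nat) (br : 'rV[R]_d -> 'rV[R]_d -> 'rV[R]_d).
Local Notation V := 'rV[R]_d.
Hypothesis Hbl : bilinear_bracket br.
Hypothesis Hll : left_leibniz br.

Lemma br0r u : br u 0 = 0.
Proof.
have := (proj2 Hbl) 1 0 0 u; rewrite !scale1r addr0 => h.
by move/eqP: h; rewrite eq_sym -subr_eq0 addrK => /eqP.
Qed.
Lemma brDr u v w : br u (v + w) = br u v + br u w.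
Proof. by have := (proj2 Hbl) 1 v w u; rewrite !scale1r. Qed.
Lemma brZr u a v : br u (a *: v) = a *: br u v.
Proof. by have := (proj2 Hbl) a v 0 u; rewrite !addr0 br0r addr0. Qed.
Lemma br0l u : br 0 u = 0.
Proof.
have := (proj1 Hbl) 1 0 0 u; rewrite !scale1r addr0 => h.
by move/eqP: h; rewrite eq_sym -subr_eq0 addrK => /eqP.
Qed.
Lemma brDl u v w : br (v + w) u = br v u + br w u.
Proof. by have := (proj1 Hbl) 1 v w u; rewrite !scale1r. Qed.
Lemma brZl u a v : br (a *: v) u = a *: br v u.
Proof. by have := (proj1 Hbl) a v 0 u; rewrite !addr0 br0l addr0. Qed.

Lemma br_sumr u I (r : seq I) (P : pred I) (F : I -> V) :
  br u (\sum_(i <- r | P i) F i) = \sum_(i <- r | P i) br u (F i).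
Proof. exact: (big_morph (br u) (brDr u) (br0r u)). Qed.

Lemma iter_sum x n I (r : seq I) (P : pred I) (F : I -> V) :
  iter n (br x) (\sum_(i <- r | P i) F i) = \sum_(i <- r | P i) iter n (br x) (F i).
Proof.
elim: n => //= n IH; by rewrite IH br_sumr.
Qed.
Lemma iterZ x n a v : iter n (br x) (a *: v) = a *: iter n (br x) v.
Proof. elim: n => //= n IH; by rewrite IH brZr. Qed.

Definition E n x v : V := (n`!%:R)^-1 *: iter n (br x) v.

Lemma E0 x v : E 0 x v = v.
Proof. by rewrite /E /= invr1 scale1r. Qed.

Lemma E_sum x n I (r : seq I) (P : pred I) (F : I -> V) :
  E n x (\sum_(i <- r | P i) F i) = \sum_(i <- r | P i) E n x (F i).
Proof. by rewrite /E iter_sum scaler_sumr. Qed.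
Lemma EZ x n a v : E n x (a *: v) = a *: E n x v.
Proof. by rewrite /E iterZ !scalerA mulrC. Qed.

Lemma fact_neq0 n : (n`!%:R : R) != 0.
Proof. by rewrite pnatr_eq0 -lt0n fact_gt0. Qed.

Lemma DE x n v : br x (E n x v) = n.+1%:R *: E n.+1 x v.
Proof.
rewrite /E brZr scalerA factS natrM invfM mulrA mulfV ?mul1r // ?fact_neq0 // pnatr_eq0.
Qed.

Lemma ES x n v : E n.+1 x v = (n.+1%:R)^-1 *: br x (E n x v).
Proof. by rewrite DE scalerA mulVf ?scale1r // pnatr_eq0. Qed.

Lemma leibniz2 x n a b :
  E n x (br a b) = \sum_(i < n.+1) br (E i x a) (E (n - i) x b).
Proof.
elim: n => [|n IH]; first by rewrite big_ord1 /= !E0.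
rewrite ES IH br_sumr.
have -> : \sum_(i < n.+1) br x (br (E i x a) (E (n - i) x b)) =
   \sum_(i < n.+1) (i.+1%:R *: br (E i.+1 x a) (E (n - i) x b)
        + (n - i).+1%:R *: br (E i x a) (E (n - i).+1 x b)).
  apply: eq_bigr => i _; by rewrite Hll DE brZl DE brZr.
rewrite big_split /=.
set T := fun i : nat => br (E i x a) (E (n.+1 - i) x b).
have h1 : \sum_(i < n.+1) i.+1%:R *: br (E i.+1 x a) (E (n - i) x b)
     = \sum_(i < n.+2) (i : nat)%:R *: T i.
  by rewrite [RHS]big_ord_recl /= scale0r add0r; apply: eq_bigr => i _; rewrite /T /bump /= add1n subSS.
have h2 : \sum_(i < n.+1) (n - i).+1%:R *: br (E i x a) (E (n - i).+1 x b)
     = \sum_(i < n.+2) (n.+1 - i)%:R *: T i.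
  rewrite [RHS]big_ord_recr /= subnn scale0r addr0; apply: eq_bigr => j _.
  by rewrite /T subSn // -ltnS (ltn_ord j).
rewrite h1 h2 -big_split /=.
rewrite (eq_bigr (fun i : 'I_n.+2 => n.+1%:R *: T i)); last first.
  by move=> i _; rewrite -scalerDl -natrD subnKC // -ltnS.
by rewrite -scaler_sumr scalerA mulVf ?scale1r // pnatr_eq0.
Qed.


Definition fcons (T : Type) q (a : T) (s : {ffun 'I_q -> T}) : {ffun 'I_q.+1 -> T} :=
  [ffun i => if unlift ord0 i is Some j then s j else a].
Arguments fcons {T q}.

Lemma fconsE0 (T : Type) q a (s : {ffun 'I_q -> T}) : fcons a s ord0 = a.
Proof. by rewrite /fcons ffunE unlift_none. Qed.
Lemma fconsEl (T : Type) q a (s : {ffun 'I_q -> T}) j : fcons a s (lift ord0 j) = s j.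
Proof. by rewrite /fcons ffunE liftK. Qed.

Lemma sum_ffunS (T : finType) q (G : {ffun 'I_q.+1 -> T} -> V) :
  \sum_(f : {ffun 'I_q.+1 -> T}) G f =
  \sum_(a : T) \sum_(s : {ffun 'I_q -> T}) G (fcons a s).
Proof.
rewrite pair_big /=.
rewrite (reindex (fun p : T * {ffun 'I_q -> T} => fcons p.1 p.2)) //=.
exists (fun f => (f ord0, [ffun j => f (lift ord0 j)])) => [[a s] _ | f _] /=.
  by rewrite fconsE0; congr pair; apply/ffunP => j; rewrite ffunE fconsEl.
apply/ffunP => i; rewrite /fcons ffunE.
by case: unliftP => [j ->|->]; rewrite ?ffunE.
Qed.

Lemma sum_fcons N q (a : 'I_N.+1) (s : {ffun 'I_q -> 'I_N.+1}) :
  (\sum_(j < q.+1) (fcons a s j : nat) = a + \sum_(j < q) (s j : nat))%N.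
Proof.
rewrite big_ord_recl fconsE0; congr addn; apply: eq_bigr => j _; by rewrite fconsEl.
Qed.


Lemma adc_fcons (T : Type) q (g : T -> V) a (s : {ffun 'I_q -> T}) w :
  ad_comp br [seq g (fcons a s i) | i <- enum 'I_q.+1] w =
  br (g a) (ad_comp br [seq g (s i) | i <- enum 'I_q] w).
Proof.
rewrite enum_ordSl /= fconsE0 -map_comp /ad_comp /= /ad; congr (br _ (foldr _ _ _)).
by apply: eq_map => j /=; rewrite fconsEl.
Qed.

Lemma multi x y z q : forall p N, (p <= N)%N ->
  E p x (iter q (br y) z) =
  \sum_(s : {ffun 'I_q -> 'I_N.+1})
    \sum_(k < N.+1 | (\sum_(i < q) (s i : nat) + k == p)%N)
      ad_comp br [seq E (s i) x y | i <- enum 'I_q] (E k x z).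
Proof.
elim: q => [|q IH] p N hpN.
  have -> : enum 'I_0 = [::] by apply: size0nil; rewrite size_enum_ord.
  rewrite /=.
  have hp : (p < N.+1)%N by [].
  rewrite (eq_bigr (fun _ => E p x z)); last first.
    move=> s _; rewrite (big_pred1 (Ordinal hp)) // => k.
    by rewrite big_ord0 /pred1 /= add0n -val_eqE.
  by rewrite sumr_const card_ffun !card_ord expn0 mulr1n.
rewrite /= leibniz2 (big_ord_widen N.+1 (fun i => br (E i x y) (E (p - i) x (iter q (br y) z))) (hpN : (p < N.+1)%N)).
rewrite sum_ffunS big_mkcond /=; apply: eq_bigr => a _.
case: ifP => ha.
  rewrite (IH _ N); last by apply: leq_trans hpN; apply: leq_subr.
  rewrite br_sumr; apply: eq_bigr => s _.
  rewrite br_sumr; apply: eq_big => [k|k _].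
    rewrite sum_fcons; apply/idP/idP => /eqP h; apply/eqP; lia.
  by rewrite (@adc_fcons _ _ (fun t : 'I_(N.+1) => E t x y)).
rewrite big1 // => s _; rewrite big_pred0 // => k.
rewrite sum_fcons; apply/negbTE/eqP => h; move: ha; lia.
Qed.


Lemma foldr_const x y (T : Type) (l : seq T) :
  foldr (fun x0 acc => ad br x0 acc) y [seq x | _ <- l] = iter (size l) (br x) y.
Proof. by elim: l => //= _ l ->. Qed.

Lemma A0d_E n x y : A0d br n x y = E n x y.
Proof.
case: n => [|n]; first by rewrite E0.
rewrite /A0d /A0.
have h : forall s : 'S_n.+1,
  ad_comp br [seq (fun _ : 'I_n.+1 => x) (s i) | i <- enum 'I_n.+1] y = iter n.+1 (br x) y.
  by move=> s; rewrite /ad_comp foldr_const size_enum_ord.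
rewrite (eq_bigr _ (fun s _ => h s)) sumr_const.
rewrite (_ : #|_| = (n.+1)`!); last exact: card_Sn.
rewrite -(scaler_nat _ (iter n.+1 (br x) y)) scalerA /E.
by congr (_ *: _); rewrite expr2 invfM -mulrA mulVf ?mulr1 ?fact_neq0.
Qed.

Lemma part2 p q x y z : (1 <= p)%N -> (1 <= q)%N ->
      A0d br p x (A0d br q y z) =
      \sum_(s : {ffun 'I_q -> 'I_p.+1})
        \sum_(k < p.+1 | (\sum_(i < q) (s i : nat) + k == p)%N)
          A0 br (fun i : 'I_q => A0d br (s i) x y) (A0d br k x z).
Proof.
move=> _ hq.
have AE : A0d br = fun n => E n.
  by apply: funext => n; apply: funext => a; apply: funext => b; rewrite A0d_E.
rewrite AE /=.
case: q hq => [//|q] _.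
rewrite [E q.+1 y z]/E EZ (multi _ _ _ _ _ _ (leqnn p)).
set c := ((q.+1)`!%:R : R).
rewrite /A0.
under eq_bigr do under eq_bigr do rewrite -/c.
have -> : \sum_(s : {ffun 'I_q.+1 -> 'I_p.+1})
   \sum_(k < p.+1 | (\sum_(i < q.+1) (s i : nat) + k == p)%N)
     (c ^+ 2)^-1 *: \sum_(σ : 'S_q.+1)
        ad_comp br [seq E (s (σ i)) x y | i <- enum 'I_q.+1] (E k x z)
   = (c ^+ 2)^-1 *: \sum_(σ : 'S_q.+1) \sum_(s : {ffun 'I_q.+1 -> 'I_p.+1})
   \sum_(k < p.+1 | (\sum_(i < q.+1) (s i : nat) + k == p)%N)
        ad_comp br [seq E (s (σ i)) x y | i <- enum 'I_q.+1] (E k x z).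
  rewrite scaler_sumr.
  under eq_bigr do under eq_bigr do rewrite scaler_sumr.
  under eq_bigr do rewrite exchange_big /=.
  rewrite exchange_big /=; apply: eq_bigr => σ _.
  by rewrite scaler_sumr; apply: eq_bigr => s _; rewrite scaler_sumr.
have hσ : forall σ : 'S_q.+1,
  \sum_(s : {ffun 'I_q.+1 -> 'I_p.+1})
        \sum_(k < p.+1 | (\sum_(i < q.+1) (s i : nat) + k == p)%N)
           ad_comp br [seq E (s (σ i)) x y | i <- enum 'I_q.+1] (E k x z) =
  \sum_(s : {ffun 'I_q.+1 -> 'I_p.+1})
     \sum_(k < p.+1 | (\sum_(i < q.+1) (s i : nat) + k == p)%N)
        ad_comp br [seq E (s i) x y | i <- enum 'I_q.+1] (E k x z).
  move=> σ.
  rewrite [RHS](reindex (fun s : {ffun 'I_q.+1 -> 'I_p.+1} => [ffun i => s (σ i)])) /=.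
    apply: eq_bigr => s _; apply: eq_big => [k|k _].
      congr (_ == _); congr addn.
      rewrite [RHS](eq_bigr (fun i => (s (σ i) : nat))); last by move=> i _; rewrite ffunE.
      exact: (reindex_inj (@perm_inj _ σ)).
    by congr ad_comp; apply: eq_map => i; rewrite ffunE.
  exists (fun s : {ffun 'I_q.+1 -> 'I_p.+1} => [ffun i => s ((σ^-1)%g i)]) => s _.
    by apply/ffunP => i; rewrite !ffunE permKV.
  by apply/ffunP => i; rewrite !ffunE permK.
rewrite (eq_bigr _ (fun σ _ => hσ σ)) sumr_const.
rewrite (_ : #|_| = (q.+1)`!); last exact: card_Sn.
rewrite -(scaler_nat _ (\sum_s _)) scalerA -/c.
by congr (_ *: _); rewrite expr2 invfM -mulrA mulVf ?mulr1 ?fact_neq0.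
Qed.


Lemma entry_le (v : V) j : `|v 0 j| <= `|v|.
Proof.
rewrite [X in _ <= X]mx_normrE.
exact: (le_bigmax _ (fun ij : 'I_1 * 'I_d => `|v ij.1 ij.2|) (0, j)).
Qed.

Lemma ad_bound x : exists2 C : R, 0 <= C & forall v : V, `|br x v| <= C * `|v|.
Proof.
exists (\sum_(j < d) `|br x (delta_mx 0 j)|); first by apply: sumr_ge0 => j _.
move=> v; rewrite {1}(row_sum_delta v) br_sumr.
under eq_bigr do rewrite brZr.
apply: le_trans (ler_norm_sum _ _ _) _.
rewrite mulr_suml; apply: ler_sum => j _.
by rewrite normrZ mulrC; apply: ler_wpM2l => //; apply: entry_le.
Qed.

Lemma exp_cvg x y : cvgn (series (fun k => E k x y)).
Proof.
have [C C0 HC] := ad_bound x.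
have HI : forall k, `|iter k (br x) y| <= C ^+ k * `|y|.
  elim => [|k IH] /=; first by rewrite expr0 mul1r.
  apply: le_trans (HC _) _; rewrite exprS -mulrA; exact: ler_wpM2l.
apply: normed_cvg.
apply: (@series_le_cvg _ _ (fun k => `|y| * exp_coeff C k)).
- by move=> n; apply: normr_ge0.
- by move=> n; rewrite mulr_ge0 // /exp_coeff /= divr_ge0 // exprn_ge0.
- move=> n /=; rewrite /E normrZ ger0_norm ?invr_ge0 // /exp_coeff /=.
  rewrite mulrA mulrC [_ * C ^+ n]mulrC; apply: ler_wpM2r; first by rewrite invr_ge0.
  exact: HI.
rewrite (_ : series _ = (fun n => `|y| * series (exp_coeff C) n)).
  apply: is_cvgM; [exact: is_cvg_cst | exact: is_cvg_series_exp_coeff].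
by apply: funext => n; rewrite /series /= big_distrr.
Qed.

End Alg.

Local Open Scope classical_set_scope.
Local Open Scope ring_scope.

Theorem corollary2 (R : realType) (d : nat) (br : 'rV[R]_d -> 'rV[R]_d -> 'rV[R]_d) :
  bilinear_bracket br -> left_leibniz br ->
  (forall x y : 'rV[R]_d,
      series (fun n : nat => A0d br n x y) @ \oo --> expad br x y) /\
  (forall (p q : nat) (x y z : 'rV[R]_d), (1 <= p)%N -> (1 <= q)%N ->
      A0d br p x (A0d br q y z) =
      \sum_(s : {ffun 'I_q -> 'I_p.+1})
        \sum_(k < p.+1 | (\sum_(i < q) (s i : nat) + k == p)%N)
          A0 br (fun i : 'I_q => A0d br (s i) x y) (A0d br k x z)).
Proof.
move=> Hbl Hll; split; last by move=> p q x y z; exact: part2.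
move=> x y.
rewrite (_ : (fun n => A0d br n x y) = fun n => @E _ _ br n x y); last first.
  by apply: funext => n; rewrite A0d_E.
exact: (@exp_cvg _ _ br Hbl x y).
Qed.
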